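(* Let $f(x,y,z)=xyz(x+y+z)$ on $\mathbb{R}^3$. Then the index cone of $f$ is nonempty, and the surface $M=\{f=1\}$ inside the index cone, with the Riemannian metric given by restricting $-\frac{1}{12}\,\partial^2 f/\partial x_i\partial x_j$, has positive curvature everywhere.
   Context: For a real form $f$ of degree $d$ on $\mathbb{R}^n$, the index cone is the set of points $x$ where $f(x)>0$ and the Hessian matrix $(\partial^2 f/\partial x_i\partial x_j)(x)$ has signature $(1,n-1)$. On the hypersurface $\{f=1\}$ in the index cone, the restriction of $-\frac{1}{d(d-1)}\partial^2 f/\partial x_i\partial x_j$ is a Riemannian metric (here $d=4$). *)

(* Defs.v *)
From Stdlib Require Import Reals.
From Coquelicot Require Import Coquelicot.
Open Scope R_scope.

Definition R3 := (R * R * R)%type.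

(** i-th coordinate (i = 0,1,2; indices >= 2 give the last one). *)
Definition coord (p : R3) (i : nat) : R :=
  match i with
  | O => fst (fst p)
  | S O => snd (fst p)
  | _ => snd p
  end.

Definition shift (p : R3) (i : nat) (t : R) : R3 :=
  match i with
  | O => (fst (fst p) + t, snd (fst p), snd p)
  | S O => (fst (fst p), snd (fst p) + t, snd p)
  | _ => (fst (fst p), snd (fst p), snd p + t)
  end.

Definition partial3 (F : R3 -> R) (i : nat) (p : R3) : R :=
  Derive (fun t => F (shift p i t)) 0.

Definition hessian3 (F : R3 -> R) (p : R3) (i j : nat) : R :=
  partial3 (partial3 F j) i p.

Definition qform3 (H : nat -> nat -> R) (a b : R3) : R :=
  sum_f_R0 (fun i => sum_f_R0 (fun j => H i j * coord a i * coord b j) 2) 2.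

Definition det3 (a b c : R3) : R :=
  coord a 0 * (coord b 1 * coord c 2 - coord b 2 * coord c 1)
  - coord b 0 * (coord a 1 * coord c 2 - coord a 2 * coord c 1)
  + coord c 0 * (coord a 1 * coord b 2 - coord a 2 * coord b 1).

(** A symmetric form H on R^3 has signature (1, 2) (= (1, n-1) for n = 3):
    there is a basis of R^3 in which H is diagonal with one positive and
    two negative diagonal entries (well defined by Sylvester's law). *)
Definition signature_1_2 (H : nat -> nat -> R) : Prop :=
  exists v1 v2 v3 : R3,
    det3 v1 v2 v3 <> 0 /\
    qform3 H v1 v2 = 0 /\ qform3 H v1 v3 = 0 /\ qform3 H v2 v3 = 0 /\
    qform3 H v1 v1 > 0 /\ qform3 H v2 v2 < 0 /\ qform3 H v3 v3 < 0.

Definition index_cone (F : R3 -> R) (p : R3) : Prop :=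
  F p > 0 /\ signature_1_2 (hessian3 F p).

Definition on_M (F : R3 -> R) (p : R3) : Prop :=
  F p = 1 /\ index_cone F p.

Definition hess_metric (F : R3 -> R) (d : nat) (p : R3) (a b : R3) : R :=
  - / (INR d * (INR d - 1)) * qform3 (hessian3 F p) a b.

Definition f_xyz (p : R3) : R :=
  let '(x, y, z) := p in x * y * z * (x + y + z).

Definition pdu (h : R -> R -> R) (u v : R) : R := Derive (fun t => h t v) u.
Definition pdv (h : R -> R -> R) (u v : R) : R := Derive (fun t => h u t) v.

Fixpoint Ck (k : nat) (h : R -> R -> R) (D : R -> R -> Prop) : Prop :=
  match k with
  | O => forall u v, D u v -> continuous (fun p : R * R => h (fst p) (snd p)) (u, v)
  | S k' =>
      (forall u v, D u v -> ex_derive (fun t => h t v) u /\ ex_derive (fun t => h u t) v)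
      /\ Ck k' h D /\ Ck k' (pdu h) D /\ Ck k' (pdv h) D
  end.

Definition open_disc (u0 v0 r : R) (u v : R) : Prop :=
  (u - u0) ^ 2 + (v - v0) ^ 2 < r ^ 2.

Definition phi_u (phi : R -> R -> R3) (u v : R) : R3 :=
  (pdu (fun a b => coord (phi a b) 0) u v,
   pdu (fun a b => coord (phi a b) 1) u v,
   pdu (fun a b => coord (phi a b) 2) u v).
Definition phi_v (phi : R -> R -> R3) (u v : R) : R3 :=
  (pdv (fun a b => coord (phi a b) 0) u v,
   pdv (fun a b => coord (phi a b) 1) u v,
   pdv (fun a b => coord (phi a b) 2) u v).

(** Cross product (immersion condition: phi_u x phi_v <> 0). *)
Definition cross (a b : R3) : R3 :=
  (coord a 1 * coord b 2 - coord a 2 * coord b 1,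
   coord a 2 * coord b 0 - coord a 0 * coord b 2,
   coord a 0 * coord b 1 - coord a 1 * coord b 0).

Definition coefE F d phi u v := hess_metric F d (phi u v) (phi_u phi u v) (phi_u phi u v).
Definition coefF F d phi u v := hess_metric F d (phi u v) (phi_u phi u v) (phi_v phi u v).
Definition coefG F d phi u v := hess_metric F d (phi u v) (phi_v phi u v) (phi_v phi u v).

Definition det33 (a11 a12 a13 a21 a22 a23 a31 a32 a33 : R) : R :=
  a11 * (a22 * a33 - a23 * a32) - a12 * (a21 * a33 - a23 * a31)
  + a13 * (a21 * a32 - a22 * a31).

(** Gaussian curvature at (u, v) of the metric E du^2 + 2F du dv + G dv^2
    in the local coordinates given by phi (Brioschi formula). *)
Definition gauss_curvature (F : R3 -> R) (d : nat) (phi : R -> R -> R3) (u v : R) : R :=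
  let E := coefE F d phi in
  let Fc := coefF F d phi in
  let G := coefG F d phi in
  ( det33 (- / 2 * pdv (pdv E) u v + pdv (pdu Fc) u v - / 2 * pdu (pdu G) u v)
          (/ 2 * pdu E u v) (pdu Fc u v - / 2 * pdv E u v)
          (pdv Fc u v - / 2 * pdu G u v) (E u v) (Fc u v)
          (/ 2 * pdv G u v) (Fc u v) (G u v)
  - det33 0 (/ 2 * pdv E u v) (/ 2 * pdu G u v)
          (/ 2 * pdv E u v) (E u v) (Fc u v)
          (/ 2 * pdu G u v) (Fc u v) (G u v) )
  / (E u v * G u v - Fc u v ^ 2) ^ 2.

(* Main.v *)
Require Import Defs.
From Stdlib Require Import Reals Lra Lia Psatz.
From Coquelicot Require Import Coquelicot.
Open Scope R_scope.

Definition gr (p v : R3) : R :=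
  let x := coord p 0 in let y := coord p 1 in let z := coord p 2 in
  y*z*(2*x+y+z) * coord v 0 + x*z*(x+2*y+z) * coord v 1 + x*y*(x+y+2*z) * coord v 2.
Definition Hp (i j : nat) (p : R3) : R :=
  let x := coord p 0 in let y := coord p 1 in let z := coord p 2 in
  match i, j with
  | 0, 0 => 2*y*z | 1, 1 => 2*x*z | 2, 2 => 2*x*y
  | 0, 1 | 1, 0 => z*(2*x+2*y+z)
  | 0, 2 | 2, 0 => y*(2*x+y+2*z)
  | 1, 2 | 2, 1 => x*(x+2*y+2*z)
  | _, _ => 0 end.
Definition Gp (j : nat) (p : R3) : R :=
  let x := coord p 0 in let y := coord p 1 in let z := coord p 2 in
  match j with 0 => y*z*(2*x+y+z) | 1 => x*z*(x+2*y+z) | _ => x*y*(x+y+2*z) end.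


Lemma partial3_f j p : (j <= 2)%nat -> partial3 f_xyz j p = Gp j p.
Proof.
  intros Hj. destruct p as [[x y] z]. unfold partial3.
  destruct j as [|[|[|j]]]; try lia; simpl; apply is_derive_unique; auto_derive; auto; ring.
Qed.

Lemma hessian3_f i j p : (i <= 2)%nat -> (j <= 2)%nat -> hessian3 f_xyz p i j = Hp i j p.
Proof.
  intros Hi Hj. unfold hessian3, partial3 at 1.
  rewrite (Derive_ext _ (fun t => Gp j (shift p i t))) by (intros; apply partial3_f; auto).
  destruct p as [[x y] z].
  destruct i as [|[|[|i]]]; try lia; destruct j as [|[|[|j]]]; try lia; simpl;
  apply is_derive_unique; auto_derive; auto; ring.
Qed.

Definition fr x y z := x*y*z*(x+y+z).
Definition grr x y z v0 v1 v2 :=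
  y*z*(2*x+y+z) * v0 + x*z*(x+2*y+z) * v1 + x*y*(x+y+2*z) * v2.
Definition hr x y z v0 v1 v2 w0 w1 w2 :=
  2*y*z*v0*w0 + 2*x*z*v1*w1 + 2*x*y*v2*w2
  + z*(2*x+2*y+z)*(v0*w1+v1*w0) + y*(2*x+y+2*z)*(v0*w2+v2*w0)
  + x*(x+2*y+2*z)*(v1*w2+v2*w1).
Definition Tr x y z sx sy sz v0 v1 v2 w0 w1 w2 :=
  2*(sy*z+y*sz)*v0*w0 + 2*(sx*z+x*sz)*v1*w1 + 2*(sx*y+x*sy)*v2*w2
  + (sz*(2*x+2*y+z) + z*(2*sx+2*sy+sz))*(v0*w1+v1*w0)
  + (sy*(2*x+y+2*z) + y*(2*sx+sy+2*sz))*(v0*w2+v2*w0)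
  + (sx*(x+2*y+2*z) + x*(sx+2*sy+2*sz))*(v1*w2+v2*w1).

Definition R4 := (R*R*R*R)%type.
Definition hatv x y z u0 u1 u2 : R4 := (u0/x, u1/y, u2/z, (u0+u1+u2)/(x+y+z)).
Definition sum4 (v : R4) := let '(a,b,c,d) := v in a+b+c+d.
Definition dot4 (v w : R4) := let '(a,b,c,d) := v in let '(a',b',c',d') := w in a*a'+b*b'+c*c'+d*d'.
Definition tri4 (v w u : R4) := let '(a,b,c,d) := v in let '(a',b',c',d') := w in
  let '(a'',b'',c'',d'') := u in a*a'*a''+b*b'*b''+c*c'*c''+d*d'*d''.

Lemma L_g x y z u0 u1 u2 : x<>0 -> y<>0 -> z<>0 -> x+y+z<>0 ->
  grr x y z u0 u1 u2 = fr x y z * sum4 (hatv x y z u0 u1 u2).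
Proof. intros. unfold grr, fr, sum4, hatv. field. auto. Qed.

Lemma L_h x y z u0 u1 u2 v0 v1 v2 : x<>0 -> y<>0 -> z<>0 -> x+y+z<>0 ->
  hr x y z u0 u1 u2 v0 v1 v2 = fr x y z *
   (sum4 (hatv x y z u0 u1 u2) * sum4 (hatv x y z v0 v1 v2)
    - dot4 (hatv x y z u0 u1 u2) (hatv x y z v0 v1 v2)).
Proof. intros. unfold hr, fr, sum4, dot4, hatv. field. auto. Qed.

Lemma L_T x y z s0 s1 s2 u0 u1 u2 v0 v1 v2 : x<>0 -> y<>0 -> z<>0 -> x+y+z<>0 ->
  Tr x y z s0 s1 s2 u0 u1 u2 v0 v1 v2 = fr x y z *
   (sum4 (hatv x y z s0 s1 s2) * sum4 (hatv x y z u0 u1 u2) * sum4 (hatv x y z v0 v1 v2)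
    - sum4 (hatv x y z s0 s1 s2) * dot4 (hatv x y z u0 u1 u2) (hatv x y z v0 v1 v2)
    - sum4 (hatv x y z u0 u1 u2) * dot4 (hatv x y z s0 s1 s2) (hatv x y z v0 v1 v2)
    - sum4 (hatv x y z v0 v1 v2) * dot4 (hatv x y z s0 s1 s2) (hatv x y z u0 u1 u2)
    + 2 * tri4 (hatv x y z s0 s1 s2) (hatv x y z u0 u1 u2) (hatv x y z v0 v1 v2)).
Proof. intros. unfold Tr, fr, sum4, dot4, tri4, hatv. field. auto. Qed.

Definition sub4 (v w : R4) : R4 := let '(a,b,c,d) := v in let '(a',b',c',d') := w in (a-a',b-b',c-c',d-d').
Definition mul4 (v w : R4) : R4 := let '(a,b,c,d) := v in let '(a',b',c',d') := w in (a*a',b*b',c*c',d*d').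
Definition det4c (Y al be : R4) : R :=
  let '(y0,y1,y2,y3) := Y in let '(a0,a1,a2,a3) := al in let '(b0,b1,b2,b3) := be in
  det33 y1 a1 b1 y2 a2 b2 y3 a3 b3 - det33 y0 a0 b0 y2 a2 b2 y3 a3 b3
  + det33 y0 a0 b0 y1 a1 b1 y3 a3 b3 - det33 y0 a0 b0 y1 a1 b1 y2 a2 b2.
Definition wv x y z (Y : R4) := let '(y0,y1,y2,y3) := Y in x*y0+y*y1+z*y2-(x+y+z)*y3.
Definition Qf x y z (u v : R4) := let '(u0,u1,u2,u3) := u in let '(v0,v1,v2,v3) := v in
  x*u0*v0+y*u1*v1+z*u2*v2-(x+y+z)*u3*v3.
Definition D123 (al be : R4) := let '(a0,a1,a2,a3) := al in let '(b0,b1,b2,b3) := be in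
  det33 1 a0 b0 1 a1 b1 1 a2 b2.

Lemma I1 x y z a0 a1 a2 b0 b1 b2 Y : x<>0 -> y<>0 -> z<>0 -> x+y+z<>0 ->
  -(x+y+z) * det4c Y (hatv x y z a0 a1 a2) (hatv x y z b0 b1 b2)
  = wv x y z Y * D123 (hatv x y z a0 a1 a2) (hatv x y z b0 b1 b2).
Proof. intros. destruct Y as [[[y0 y1] y2] y3]. unfold det4c, wv, D123, hatv, det33. field. auto. Qed.

Lemma I2 x y z a0 a1 a2 b0 b1 b2 A0 A1 A2 : x<>0 -> y<>0 -> z<>0 -> x+y+z<>0 ->
  wv x y z (sub4 (hatv x y z A0 A1 A2) (mul4 (hatv x y z a0 a1 a2) (hatv x y z b0 b1 b2)))
  = - Qf x y z (hatv x y z a0 a1 a2) (hatv x y z b0 b1 b2).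
Proof. intros. unfold wv, sub4, mul4, Qf, hatv. field. auto. Qed.

Lemma I3 x y z a0 a1 a2 b0 b1 b2 : x<>0 -> y<>0 -> z<>0 -> x+y+z<>0 ->
  (x+y+z) * (Qf x y z (hatv x y z a0 a1 a2) (hatv x y z a0 a1 a2) * Qf x y z (hatv x y z b0 b1 b2) (hatv x y z b0 b1 b2)
     - Qf x y z (hatv x y z a0 a1 a2) (hatv x y z b0 b1 b2) ^ 2)
  = x*y*z * D123 (hatv x y z a0 a1 a2) (hatv x y z b0 b1 b2) ^ 2.
Proof. intros. unfold Qf, D123, hatv, det33. field. auto. Qed.

Lemma Idet x y z a0 a1 a2 b0 b1 b2 : x<>0 -> y<>0 -> z<>0 -> x+y+z<>0 ->
  det3 (x,y,z) (a0,a1,a2) (b0,b1,b2) = x*y*z * D123 (hatv x y z a0 a1 a2) (hatv x y z b0 b1 b2).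
Proof. intros. unfold det3, D123, hatv, det33, coord; simpl. field. auto. Qed.

Lemma L1 (U W al be : R4) : sum4 U = 0 -> sum4 W = 0 -> sum4 al = 0 -> sum4 be = 0 ->
  4 * det33 (dot4 U W) (dot4 U al) (dot4 U be) (dot4 al W) (dot4 al al) (dot4 al be)
            (dot4 be W) (dot4 be al) (dot4 be be) = det4c U al be * det4c W al be.
Proof.
  destruct U as [[[u0 u1] u2] u3], W as [[[w0 w1] w2] w3], al as [[[a0 a1] a2] a3], be as [[[b0 b1] b2] b3].
  unfold sum4; intros HU HW Ha Hb.
  replace u3 with (-(u0+u1+u2)) by lra. replace w3 with (-(w0+w1+w2)) by lra.
  replace a3 with (-(a0+a1+a2)) by lra. replace b3 with (-(b0+b1+b2)) by lra.
  unfold dot4, det4c, det33. ring.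
Qed.

Definition Qr rx ry rz sx sy sz v0 v1 v2 w0 w1 w2 :=
  2*(sy*rz+ry*sz)*v0*w0 + 2*(sx*rz+rx*sz)*v1*w1 + 2*(sx*ry+rx*sy)*v2*w2
  + (sz*(2*rx+2*ry+rz) + rz*(2*sx+2*sy+sz))*(v0*w1+v1*w0)
  + (sy*(2*rx+ry+2*rz) + ry*(2*sx+sy+2*sz))*(v0*w2+v2*w0)
  + (sx*(rx+2*ry+2*rz) + rx*(sx+2*sy+2*sz))*(v1*w2+v2*w1).

Definition gg (p v : R3) := grr (coord p 0) (coord p 1) (coord p 2) (coord v 0) (coord v 1) (coord v 2).
Definition hh (p v w : R3) := hr (coord p 0) (coord p 1) (coord p 2) (coord v 0) (coord v 1) (coord v 2)
  (coord w 0) (coord w 1) (coord w 2).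
Definition TT (p s v w : R3) := Tr (coord p 0) (coord p 1) (coord p 2) (coord s 0) (coord s 1) (coord s 2)
  (coord v 0) (coord v 1) (coord v 2) (coord w 0) (coord w 1) (coord w 2).
Definition QQ (r s v w : R3) := Qr (coord r 0) (coord r 1) (coord r 2) (coord s 0) (coord s 1) (coord s 2)
  (coord v 0) (coord v 1) (coord v 2) (coord w 0) (coord w 1) (coord w 2).
Definition fp (p : R3) := fr (coord p 0) (coord p 1) (coord p 2).

Definition brio (E F G Eu Ev Fu Fv Gu Gv Evv Fuv Guu : R) :=
 (det33 (- / 2 * Evv + Fuv - / 2 * Guu) (/ 2 * Eu) (Fu - / 2 * Ev) (Fv - / 2 * Gu) E F (/ 2 * Gv) F G
 - det33 0 (/ 2 * Ev) (/ 2 * Gu) (/ 2 * Ev) E F (/ 2 * Gu) F G) / (E * G - F ^ 2) ^ 2.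

Lemma sum4_sub (X Y Z : R4) : sum4 (sub4 X (mul4 Y Z)) = sum4 X - dot4 Y Z.
Proof. destruct X as [[[? ?] ?] ?], Y as [[[? ?] ?] ?], Z as [[[? ?] ?] ?]. simpl. ring. Qed.
Lemma dot4_comm (X Y : R4) : dot4 X Y = dot4 Y X.
Proof. destruct X as [[[? ?] ?] ?], Y as [[[? ?] ?] ?]. simpl. ring. Qed.

Lemma gram_pos (al be : R4) : sum4 al = 0 -> sum4 be = 0 -> D123 al be <> 0 ->
  dot4 al al * dot4 be be - dot4 al be ^ 2 > 0.
Proof.
  destruct al as [[[a0 a1] a2] a3], be as [[[b0 b1] b2] b3]. unfold sum4, D123, dot4, det33.
  intros Ha Hb HD.
  replace a3 with (-(a0+a1+a2)) by lra. replace b3 with (-(b0+b1+b2)) by lra.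
  assert (HDm : 1 * (a1 * b2 - b1 * a2) - a0 * (1 * b2 - b1 * 1) + b0 * (1 * a2 - a1 * 1)
     = (a0*b1-a1*b0)+(a1*b2-a2*b1)+(a2*b0-a0*b2)) by ring.
  rewrite HDm in HD.
  set (m01 := a0*b1-a1*b0) in *. set (m12 := a1*b2-a2*b1) in *. set (m20 := a2*b0-a0*b2) in *.
  assert (Hlag : (a0 * a0 + a1 * a1 + a2 * a2 + - (a0 + a1 + a2) * - (a0 + a1 + a2)) *
   (b0 * b0 + b1 * b1 + b2 * b2 + - (b0 + b1 + b2) * - (b0 + b1 + b2)) -
   (a0 * b0 + a1 * b1 + a2 * b2 + - (a0 + a1 + a2) * - (b0 + b1 + b2)) ^ 2
   = m01^2+m12^2+m20^2 + (m20-m01)^2 + (m01-m12)^2 + (m12-m20)^2).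
  { unfold m01, m12, m20. ring. }
  rewrite Hlag.
  pose proof (Rsqr_pos_lt _ HD) as Hsq. unfold Rsqr in Hsq.
  assert (3*(m01^2+m12^2+m20^2) - (m01+m12+m20)*(m01+m12+m20) = (m01-m12)^2+(m12-m20)^2+(m20-m01)^2) by ring.
  assert (0 <= (m01-m12)^2) by apply pow2_ge_0.
  assert (0 <= (m12-m20)^2) by apply pow2_ge_0.
  assert (0 <= (m20-m01)^2) by apply pow2_ge_0.
  lra.
Qed.

Lemma Xcomb (p a b A B C K L : R3) :
   - / 2 * (-/12*((QQ b b a a + TT p C a a + TT p b B a + TT p b a B) + (TT p b B a + hh p K a + hh p B B) + (TT p b a B + hh p B B + hh p a K)))
   + (-/12*((QQ b a a b + TT p B a b + TT p a B b + TT p a a C) + (TT p b A b + hh p L b + hh p A C) + (TT p b a B + hh p B B + hh p a K)))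
   - / 2 * (-/12*((QQ a a b b + TT p A b b + TT p a B b + TT p a b B) + (TT p a B b + hh p L b + hh p B B) + (TT p a b B + hh p B B + hh p b L)))
  = -/12 * (TT p a a C / 2 + TT p A b b / 2 - TT p a b B + hh p A C - hh p B B).
Proof.
  destruct p as [[x y] z], a as [[a0 a1] a2], b as [[b0 b1] b2], A as [[A0 A1] A2],
    B as [[B0 B1] B2], C as [[C0 C1] C2], K as [[K0 K1] K2], L as [[L0 L1] L2].
  unfold hh, TT, QQ. cbn [coord fst snd]. unfold Tr, hr, Qr. field.
Qed.

Lemma core (p a b A B C K L : R3) :
  fp p = 1 -> gg p a = 0 -> gg p b = 0 -> hh p a a + gg p A = 0 ->
  hh p b a + gg p B = 0 -> hh p b b + gg p C = 0 -> det3 p a b <> 0 ->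
  brio (-/12*hh p a a) (-/12*hh p a b) (-/12*hh p b b)
   (-/12*(TT p a a a + hh p A a + hh p a A))
   (-/12*(TT p b a a + hh p B a + hh p a B))
   (-/12*(TT p a a b + hh p A b + hh p a B))
   (-/12*(TT p b a b + hh p B b + hh p a C))
   (-/12*(TT p a b b + hh p B b + hh p b B))
   (-/12*(TT p b b b + hh p C b + hh p b C))
   (-/12*((QQ b b a a + TT p C a a + TT p b B a + TT p b a B) + (TT p b B a + hh p K a + hh p B B) + (TT p b a B + hh p B B + hh p a K)))
   (-/12*((QQ b a a b + TT p B a b + TT p a B b + TT p a a C) + (TT p b A b + hh p L b + hh p A C) + (TT p b a B + hh p B B + hh p a K)))
   (-/12*((QQ a a b b + TT p A b b + TT p a B b + TT p a b B) + (TT p a B b + hh p L b + hh p B B) + (TT p a b B + hh p B B + hh p b L)))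
  > 0.
Proof.
  unfold brio. rewrite Xcomb.
  destruct p as [[x y] z], a as [[a0 a1] a2], b as [[b0 b1] b2], A as [[A0 A1] A2],
    B as [[B0 B1] B2], C as [[C0 C1] C2].
  unfold fp, gg, hh, TT. cbn [coord fst snd].
  intros Hf Ha Hb HA HB HC Hdet.
  assert (Hx : x <> 0) by (intro; subst; unfold fr in Hf; lra).
  assert (Hy : y <> 0) by (intro; subst; unfold fr in Hf; lra).
  assert (Hz : z <> 0) by (intro; subst; unfold fr in Hf; lra).
  assert (Hs : x+y+z <> 0) by (intro Hs; unfold fr in Hf; rewrite Hs in Hf; lra).
  rewrite Idet in Hdet by auto.
  pose proof (I3 x y z a0 a1 a2 b0 b1 b2 Hx Hy Hz Hs) as HI3.
  pose proof (I2 x y z a0 a1 a2 a0 a1 a2 A0 A1 A2 Hx Hy Hz Hs) as HI2U.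
  pose proof (I2 x y z a0 a1 a2 b0 b1 b2 B0 B1 B2 Hx Hy Hz Hs) as HI2V.
  pose proof (I2 x y z b0 b1 b2 b0 b1 b2 C0 C1 C2 Hx Hy Hz Hs) as HI2W.
  pose proof (I1 x y z a0 a1 a2 b0 b1 b2 (sub4 (hatv x y z A0 A1 A2) (mul4 (hatv x y z a0 a1 a2) (hatv x y z a0 a1 a2))) Hx Hy Hz Hs) as HI1U.
  pose proof (I1 x y z a0 a1 a2 b0 b1 b2 (sub4 (hatv x y z B0 B1 B2) (mul4 (hatv x y z a0 a1 a2) (hatv x y z b0 b1 b2))) Hx Hy Hz Hs) as HI1V.
  pose proof (I1 x y z a0 a1 a2 b0 b1 b2 (sub4 (hatv x y z C0 C1 C2) (mul4 (hatv x y z b0 b1 b2) (hatv x y z b0 b1 b2))) Hx Hy Hz Hs) as HI1W.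
  rewrite !L_g in Ha, Hb, HA, HB, HC by auto.
  rewrite !L_h in HA, HB, HC by auto.
  rewrite !L_h by auto. rewrite !L_T by auto.
  rewrite Hf in *.
  assert (Sa : sum4 (hatv x y z a0 a1 a2) = 0) by lra.
  assert (Sb : sum4 (hatv x y z b0 b1 b2) = 0) by lra.
  rewrite Sa in HA, HB. rewrite Sb in HB, HC.
  assert (SA : sum4 (hatv x y z A0 A1 A2) = dot4 (hatv x y z a0 a1 a2) (hatv x y z a0 a1 a2)) by lra.
  assert (SB : sum4 (hatv x y z B0 B1 B2) = dot4 (hatv x y z b0 b1 b2) (hatv x y z a0 a1 a2)) by lra.
  assert (SC : sum4 (hatv x y z C0 C1 C2) = dot4 (hatv x y z b0 b1 b2) (hatv x y z b0 b1 b2)) by lra.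
  repeat first [rewrite Sa | rewrite Sb | rewrite SA | rewrite SB | rewrite SC].
  clear Ha Hb HA HB HC.
  set (al := hatv x y z a0 a1 a2) in *. set (be := hatv x y z b0 b1 b2) in *.
  set (Ah := hatv x y z A0 A1 A2) in *. set (Bh := hatv x y z B0 B1 B2) in *.
  set (Ch := hatv x y z C0 C1 C2) in *.
  clearbody al be Ah Bh Ch.
  set (U := sub4 Ah (mul4 al al)) in *. set (V := sub4 Bh (mul4 al be)) in *.
  set (W := sub4 Ch (mul4 be be)) in *.
  assert (SU : sum4 U = 0) by (unfold U; rewrite sum4_sub, SA; ring).
  assert (SV : sum4 V = 0) by (unfold V; rewrite sum4_sub, SB, dot4_comm; ring).
  assert (SW : sum4 W = 0) by (unfold W; rewrite sum4_sub, SC; ring).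
  pose proof (L1 U W al be SU SW Sa Sb) as G1.
  pose proof (L1 V V al be SV SV Sa Sb) as G2.
  match goal with |- ?N / ?Dn > 0 =>
    assert (Hnum : N = (/12)^3 * (det33 (dot4 U W) (dot4 U al) (dot4 U be) (dot4 al W) (dot4 al al) (dot4 al be) (dot4 be W) (dot4 be al) (dot4 be be) - det33 (dot4 V V) (dot4 V al) (dot4 V be) (dot4 al V) (dot4 al al) (dot4 al be) (dot4 be V) (dot4 be al) (dot4 be be)));
    [ | assert (Hden : Dn = ((/12)^2 * (dot4 al al * dot4 be be - dot4 al be ^ 2))^2) ]
  end.
  { unfold U, V, W. clear.
    destruct al as [[[a0 a1] a2] a3], be as [[[b0 b1] b2] b3], Ah as [[[A0 A1] A2] A3],
      Bh as [[[B0 B1] B2] B3], Ch as [[[C0 C1] C2] C3].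
    unfold sub4, mul4, dot4, tri4, det33. field. }
  { ring. }
  rewrite Hnum, Hden.
  assert (HD : D123 al be <> 0) by (intro H; rewrite H in Hdet; apply Hdet; ring).
  pose proof (gram_pos al be Sa Sb HD) as Hg.
  set (dU := det4c U al be) in *. set (dV := det4c V al be) in *. set (dW := det4c W al be) in *.
  set (D := D123 al be) in *.
  assert (EU : dU * (x+y+z) = Qf x y z al al * D).
  { replace (dU*(x+y+z)) with (-(-(x+y+z)*dU)) by ring. rewrite HI1U, HI2U. ring. }
  assert (EV : dV * (x+y+z) = Qf x y z al be * D).
  { replace (dV*(x+y+z)) with (-(-(x+y+z)*dV)) by ring. rewrite HI1V, HI2V. ring. }
  assert (EW : dW * (x+y+z) = Qf x y z be be * D).
  { replace (dW*(x+y+z)) with (-(-(x+y+z)*dW)) by ring. rewrite HI1W, HI2W. ring. }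
  assert (Hq : (x+y+z)^4 * (dU*dW - dV*dV) = D^4).
  { replace ((x+y+z)^4 * (dU*dW - dV*dV)) with
      ((x+y+z)^2 * ((dU*(x+y+z))*(dW*(x+y+z)) - (dV*(x+y+z))*(dV*(x+y+z)))) by ring.
    rewrite EU, EV, EW.
    replace ((x + y + z) ^ 2 * (Qf x y z al al * D * (Qf x y z be be * D) -
       Qf x y z al be * D * (Qf x y z al be * D)))
      with (D^2 * (x+y+z) * ((x+y+z) * (Qf x y z al al * Qf x y z be be - Qf x y z al be ^ 2))) by ring.
    rewrite HI3. unfold fr in Hf.
    replace (D ^ 2 * (x + y + z) * (x * y * z * D ^ 2)) with (D^4 * (x*y*z*(x+y+z))) by ring.
    rewrite Hf. ring. }
  assert (Hs2 : 0 < (x+y+z)*(x+y+z)) by (apply Rsqr_pos_lt; auto).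
  assert (HD2 : 0 < D*D) by (apply Rsqr_pos_lt; auto).
  assert (Hs4 : (x+y+z)^4 = ((x+y+z)*(x+y+z))*((x+y+z)*(x+y+z))) by ring.
  assert (HD4 : D^4 = (D*D)*(D*D)) by ring.
  rewrite Hs4, HD4 in Hq.
  assert (HX : 0 < dU*dW - dV*dV).
  { destruct (Rle_or_lt (dU*dW - dV*dV) 0) as [Hle|Hlt]; [|exact Hlt].
    exfalso. assert (0 < (D*D)*(D*D)) by (apply Rmult_lt_0_compat; auto).
    assert (((x+y+z)*(x+y+z))*((x+y+z)*(x+y+z)) * (dU*dW - dV*dV) <= 0).
    { rewrite <- (Rmult_0_r (((x+y+z)*(x+y+z))*((x+y+z)*(x+y+z)))).
      apply Rmult_le_compat_l; [|exact Hle].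
      left; apply Rmult_lt_0_compat; auto. }
    lra. }
  unfold Rgt. apply Rdiv_lt_0_compat.
  - apply Rmult_lt_0_compat.
    + apply pow_lt. apply Rinv_0_lt_compat. lra.
    + lra.
  - apply pow_lt. apply Rmult_lt_0_compat; [|lra].
    apply pow_lt. apply Rinv_0_lt_compat. lra.
Qed.

Ltac rw_der :=
  repeat match goal with
  | H : is_derive ?f ?t ?l |- context [Derive ?g ?t] =>
      rewrite (is_derive_unique g t l H)
  end.
Ltac exd := repeat split; eexists; eassumption.

Section D.
Variables (x y z v0 v1 v2 w0 w1 w2 s0 s1 s2 : R -> R) (t : R).
Variables (dx dy dz dv0 dv1 dv2 dw0 dw1 dw2 ds0 ds1 ds2 : R).
Hypotheses (Hx : is_derive x t dx) (Hy : is_derive y t dy) (Hz : is_derive z t dz)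
  (Hv0 : is_derive v0 t dv0) (Hv1 : is_derive v1 t dv1) (Hv2 : is_derive v2 t dv2)
  (Hw0 : is_derive w0 t dw0) (Hw1 : is_derive w1 t dw1) (Hw2 : is_derive w2 t dw2)
  (Hs0 : is_derive s0 t ds0) (Hs1 : is_derive s1 t ds1) (Hs2 : is_derive s2 t ds2).

Lemma d_fr : is_derive (fun u => fr (x u) (y u) (z u)) t (grr (x t) (y t) (z t) dx dy dz).
Proof. unfold fr, grr. auto_derive; [exd|]. rw_der. ring. Qed.

Lemma d_grr : is_derive (fun u => grr (x u) (y u) (z u) (v0 u) (v1 u) (v2 u)) t
  (hr (x t) (y t) (z t) dx dy dz (v0 t) (v1 t) (v2 t) + grr (x t) (y t) (z t) dv0 dv1 dv2).
Proof. unfold hr, grr. auto_derive; [exd|]. rw_der. ring. Qed.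

Lemma d_hr : is_derive (fun u => hr (x u) (y u) (z u) (v0 u) (v1 u) (v2 u) (w0 u) (w1 u) (w2 u)) t
  (Tr (x t) (y t) (z t) dx dy dz (v0 t) (v1 t) (v2 t) (w0 t) (w1 t) (w2 t)
   + hr (x t) (y t) (z t) dv0 dv1 dv2 (w0 t) (w1 t) (w2 t)
   + hr (x t) (y t) (z t) (v0 t) (v1 t) (v2 t) dw0 dw1 dw2).
Proof. unfold hr, Tr. auto_derive; [exd|]. rw_der. ring. Qed.

Lemma d_Tr : is_derive (fun u => Tr (x u) (y u) (z u) (s0 u) (s1 u) (s2 u) (v0 u) (v1 u) (v2 u) (w0 u) (w1 u) (w2 u)) t
  (Qr dx dy dz (s0 t) (s1 t) (s2 t) (v0 t) (v1 t) (v2 t) (w0 t) (w1 t) (w2 t)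
   + Tr (x t) (y t) (z t) ds0 ds1 ds2 (v0 t) (v1 t) (v2 t) (w0 t) (w1 t) (w2 t)
   + Tr (x t) (y t) (z t) (s0 t) (s1 t) (s2 t) dv0 dv1 dv2 (w0 t) (w1 t) (w2 t)
   + Tr (x t) (y t) (z t) (s0 t) (s1 t) (s2 t) (v0 t) (v1 t) (v2 t) dw0 dw1 dw2).
Proof. unfold Qr, Tr. auto_derive; [exd|]. rw_der. ring. Qed.
End D.

Definition D3 (q : R -> R3) (t : R) (dq : R3) :=
  is_derive (fun s => coord (q s) 0) t (coord dq 0) /\
  is_derive (fun s => coord (q s) 1) t (coord dq 1) /\
  is_derive (fun s => coord (q s) 2) t (coord dq 2).

Lemma d_fp q t dq : D3 q t dq -> is_derive (fun s => fp (q s)) t (gg (q t) dq).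
Proof. intros [H0 [H1 H2]]. unfold fp, gg.
  apply (d_fr (fun s => coord (q s) 0) (fun s => coord (q s) 1) (fun s => coord (q s) 2)); assumption. Qed.

Lemma d_gg q v t dq dv : D3 q t dq -> D3 v t dv ->
  is_derive (fun s => gg (q s) (v s)) t (hh (q t) dq (v t) + gg (q t) dv).
Proof. intros [H0 [H1 H2]] [G0 [G1 G2]]. unfold gg, hh.
  apply (d_grr (fun s => coord (q s) 0) (fun s => coord (q s) 1) (fun s => coord (q s) 2)
    (fun s => coord (v s) 0) (fun s => coord (v s) 1) (fun s => coord (v s) 2)); assumption. Qed.

Lemma d_hh q v w t dq dv dw : D3 q t dq -> D3 v t dv -> D3 w t dw ->
  is_derive (fun s => hh (q s) (v s) (w s)) t
    (TT (q t) dq (v t) (w t) + hh (q t) dv (w t) + hh (q t) (v t) dw).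
Proof. intros [H0 [H1 H2]] [G0 [G1 G2]] [F0 [F1 F2]]. unfold TT, hh.
  apply (d_hr (fun s => coord (q s) 0) (fun s => coord (q s) 1) (fun s => coord (q s) 2)
    (fun s => coord (v s) 0) (fun s => coord (v s) 1) (fun s => coord (v s) 2)
    (fun s => coord (w s) 0) (fun s => coord (w s) 1) (fun s => coord (w s) 2)); assumption. Qed.

Lemma d_TT q s0 v w t dq ds dv dw : D3 q t dq -> D3 s0 t ds -> D3 v t dv -> D3 w t dw ->
  is_derive (fun s => TT (q s) (s0 s) (v s) (w s)) t
    (QQ dq (s0 t) (v t) (w t) + TT (q t) ds (v t) (w t) + TT (q t) (s0 t) dv (w t) + TT (q t) (s0 t) (v t) dw).
Proof. intros [H0 [H1 H2]] [E0 [E1 E2]] [G0 [G1 G2]] [F0 [F1 F2]]. unfold QQ, TT.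
  apply (d_Tr (fun s => coord (q s) 0) (fun s => coord (q s) 1) (fun s => coord (q s) 2)
    (fun s => coord (v s) 0) (fun s => coord (v s) 1) (fun s => coord (v s) 2)
    (fun s => coord (w s) 0) (fun s => coord (w s) 1) (fun s => coord (w s) 2)
    (fun s => coord (s0 s) 0) (fun s => coord (s0 s) 1) (fun s => coord (s0 s) 2)); assumption. Qed.

Definition Vu (w : R -> R -> R3) (u v : R) : R3 :=
  (pdu (fun a b => coord (w a b) 0) u v, pdu (fun a b => coord (w a b) 1) u v,
   pdu (fun a b => coord (w a b) 2) u v).
Definition Vv (w : R -> R -> R3) (u v : R) : R3 :=
  (pdv (fun a b => coord (w a b) 0) u v, pdv (fun a b => coord (w a b) 1) u v,
   pdv (fun a b => coord (w a b) 2) u v).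

Lemma D3u w u v : ex_derive (fun s => coord (w s v) 0) u -> ex_derive (fun s => coord (w s v) 1) u ->
  ex_derive (fun s => coord (w s v) 2) u -> D3 (fun s => w s v) u (Vu w u v).
Proof. intros H0 H1 H2. split; [|split]; apply Derive_correct; auto. Qed.
Lemma D3v w u v : ex_derive (fun s => coord (w u s) 0) v -> ex_derive (fun s => coord (w u s) 1) v ->
  ex_derive (fun s => coord (w u s) 2) v -> D3 (fun s => w u s) v (Vv w u v).
Proof. intros H0 H1 H2. split; [|split]; apply Derive_correct; auto. Qed.

Definition P1d (h : R -> R -> R) (D : R -> R -> Prop) :=
  forall u v, D u v -> ex_derive (fun t => h t v) u /\ ex_derive (fun t => h u t) v.
Definition C0 (h : R -> R -> R) (D : R -> R -> Prop) :=
  forall u v, D u v -> continuous (fun p : R * R => h (fst p) (snd p)) (u, v).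

Lemma Ck3_facts h D : Ck 3 h D ->
  P1d h D /\ P1d (pdu h) D /\ P1d (pdv h) D /\ P1d (pdu (pdu h)) D /\ P1d (pdv (pdu h)) D /\
  P1d (pdu (pdv h)) D /\ P1d (pdv (pdv h)) D /\
  C0 (pdu (pdv h)) D /\ C0 (pdv (pdu h)) D /\ C0 (pdu (pdv (pdu h))) D /\ C0 (pdv (pdu (pdu h))) D.
Proof.
  intros H.
  destruct H as [Ph [_ [Hu Hv]]].
  destruct Hu as [Puh [_ [Huu Hvu]]].
  destruct Hv as [Pvh [_ [Huv Hvv]]].
  destruct Huu as [Puuh [_ [_ Cvuu]]].
  destruct Hvu as [Pvuh [Cvu [Cuvu _]]].
  destruct Huv as [Puvh [Cuv _]].
  destruct Hvv as [Pvvh _].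
  exact (conj Ph (conj Puh (conj Pvh (conj Puuh (conj Pvuh (conj Puvh (conj Pvvh
    (conj Cuv (conj Cvu (conj Cuvu Cvuu)))))))))).
Qed.

Lemma f_xyz_fp p : f_xyz p = fp p.
Proof. destruct p as [[x y] z]. reflexivity. Qed.

Lemma hm_eq q a b : hess_metric f_xyz 4 q a b = -/12 * hh q a b.
Proof.
  unfold hess_metric, qform3. cbn [sum_f_R0].
  repeat rewrite hessian3_f by lia.
  unfold hh, hr, Hp. simpl INR. field.
Qed.

Lemma is_derive_c (f : R -> R) t l c : is_derive f t l -> is_derive (fun s => c * f s) t (c * l).
Proof. intros H. apply (is_derive_scal f t c l H). Qed.

Lemma disc_loc u0 v0 r u v : 0 < r -> Rabs (u-u0) < r/4 -> Rabs (v-v0) < r/4 ->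
  locally_2d (open_disc u0 v0 r) u v.
Proof.
  intros Hr Hu Hv. assert (Hp : 0 < r/4) by lra. exists (mkposreal _ Hp).
  intros u' v' H1 H2. simpl in H1, H2. unfold open_disc.
  apply Rabs_def2 in Hu, Hv, H1, H2.
  assert (-(r/2) < u' - u0 < r/2) by lra.
  assert (-(r/2) < v' - v0 < r/2) by lra.
  nra.
Qed.

Lemma near (P : R -> Prop) v0 eps : 0 < eps -> (forall t, Rabs (t - v0) < eps -> P t) -> locally v0 P.
Proof. intros He H. exists (mkposreal eps He). intros t Ht. apply H. exact Ht. Qed.

Lemma schwarz_D f D u v : locally_2d D u v -> P1d f D -> P1d (pdu f) D -> P1d (pdv f) D ->
  C0 (pdu (pdv f)) D -> C0 (pdv (pdu f)) D -> pdu (pdv f) u v = pdv (pdu f) u v.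
Proof.
  intros HL H1 H2 H3 H4 H5.
  assert (HDuv : D u v) by (apply locally_2d_singleton in HL; exact HL).
  apply Schwarz.
  - apply locally_2d_impl with (2 := HL). apply locally_2d_forall.
    intros a b Hab. destruct (H1 a b Hab), (H2 a b Hab), (H3 a b Hab). repeat split; assumption.
  - apply continuity_2d_pt_filterlim. apply H4. exact HDuv.
  - apply continuity_2d_pt_filterlim. apply H5. exact HDuv.
Qed.

Lemma isd_plus (f g : R -> R) t a b : is_derive f t a -> is_derive g t b ->
  is_derive (fun s => f s + g s) t (a + b).
Proof. intros Hf Hg. auto_derive; [split; [eexists; eassumption|split; [eexists; eassumption|exact I]]|].
  rw_der. ring. Qed.

Lemma Vv_ext_loc w1 w2 u v : locally v (fun t => w1 u t = w2 u t) -> Vv w1 u v = Vv w2 u v.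
Proof. intros H. unfold Vv, pdv. f_equal; [f_equal|]; apply Derive_ext_loc;
  apply (filter_imp (fun t => w1 u t = w2 u t)); try exact H; intros t Ht; rewrite Ht; reflexivity. Qed.
Lemma Vu_ext_loc w1 w2 u v : locally u (fun t => w1 t v = w2 t v) -> Vu w1 u v = Vu w2 u v.
Proof. intros H. unfold Vu, pdu. f_equal; [f_equal|]; apply Derive_ext_loc;
  apply (filter_imp (fun t => w1 t v = w2 t v)); try exact H; intros t Ht; rewrite Ht; reflexivity. Qed.

Lemma cross_det p a b : fp p = 1 -> gg p a = 0 -> gg p b = 0 -> cross a b <> (0,0,0) -> det3 p a b <> 0.
Proof.
  intros Hf Ha Hb Hc Hd. apply Hc.
  assert (Id : forall k : nat, (k <= 2)%nat ->
    fp p * 4 * coord (cross a b) k =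
    det3 p a b * Gp k p - gg p b * coord (cross p a) k + gg p a * coord (cross p b) k).
  { intros k Hk. destruct p as [[x y] z], a as [[a0 a1] a2], b as [[b0 b1] b2].
    destruct k as [|[|[|k]]]; try lia; unfold fp, gg, cross, det3, fr, grr, Gp; cbn [coord fst snd]; ring. }
  rewrite Hd, Ha, Hb, Hf in Id.
  assert (I0 := Id 0%nat ltac:(lia)). assert (I1 := Id 1%nat ltac:(lia)). assert (I2 := Id 2%nat ltac:(lia)).
  destruct a as [[a0 a1] a2], b as [[b0 b1] b2]. unfold cross in *. cbn [coord fst snd] in *.
  f_equal; [f_equal|]; lra.
Qed.

Lemma triple_eq (a1 a2 a3 b1 b2 b3 : R) : a1 = b1 -> a2 = b2 -> a3 = b3 -> (a1,a2,a3) = (b1,b2,b3).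
Proof. intros; subst; reflexivity. Qed.

Lemma part2 (phi : R -> R -> R3) (u0 v0 r : R) : 0 < r ->
  (forall i : nat, Ck 3 (fun u v => coord (phi u v) i) (open_disc u0 v0 r)) ->
  (forall u v, open_disc u0 v0 r u v -> on_M f_xyz (phi u v)) ->
  cross (phi_u phi u0 v0) (phi_v phi u0 v0) <> (0, 0, 0) ->
  gauss_curvature f_xyz 4 phi u0 v0 > 0.
Proof.
  intros Hr HCk HM Hcr.
  set (D := open_disc u0 v0 r) in *.
  destruct (Ck3_facts _ _ (HCk 0%nat)) as (Q0 & Pu0 & Pv0 & Puu0 & Pvu0 & Puv0 & Pvv0 & Cuv0 & Cvu0 & Cuvu0 & Cvuu0).
  destruct (Ck3_facts _ _ (HCk 1%nat)) as (Q1 & Pu1 & Pv1 & Puu1 & Pvu1 & Puv1 & Pvv1 & Cuv1 & Cvu1 & Cuvu1 & Cvuu1).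
  destruct (Ck3_facts _ _ (HCk 2%nat)) as (Q2 & Pu2 & Pv2 & Puu2 & Pvu2 & Puv2 & Pvv2 & Cuv2 & Cvu2 & Cuvu2 & Cvuu2).
  assert (HL : forall u v, Rabs (u-u0) < r/4 -> Rabs (v-v0) < r/4 -> locally_2d D u v)
    by (intros; apply disc_loc; auto).
  assert (HN : forall u v, Rabs (u-u0) < r/4 -> Rabs (v-v0) < r/4 -> D u v)
    by (intros u v H1 H2; exact (locally_2d_singleton _ _ _ (HL u v H1 H2))).
  assert (H0u : Rabs (u0-u0) < r/4) by (replace (u0-u0) with 0 by ring; rewrite Rabs_R0; lra).
  assert (H0v : Rabs (v0-v0) < r/4) by (replace (v0-v0) with 0 by ring; rewrite Rabs_R0; lra).
  assert (HD0 : D u0 v0) by auto.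
  assert (Gp : forall u v, D u v -> D3 (fun s => phi s v) u (Vu phi u v) /\ D3 (fun s => phi u s) v (Vv phi u v)).
  { intros u v H. destruct (Q0 u v H), (Q1 u v H), (Q2 u v H). split; [apply D3u|apply D3v]; assumption. }
  assert (Gu : forall u v, D u v -> D3 (fun s => Vu phi s v) u (Vu (Vu phi) u v) /\ D3 (fun s => Vu phi u s) v (Vv (Vu phi) u v)).
  { intros u v H. destruct (Pu0 u v H), (Pu1 u v H), (Pu2 u v H). split; [apply D3u|apply D3v]; assumption. }
  assert (Gv : forall u v, D u v -> D3 (fun s => Vv phi s v) u (Vu (Vv phi) u v) /\ D3 (fun s => Vv phi u s) v (Vv (Vv phi) u v)).
  { intros u v H. destruct (Pv0 u v H), (Pv1 u v H), (Pv2 u v H). split; [apply D3u|apply D3v]; assumption. }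
  assert (Guu : forall u v, D u v -> D3 (fun s => Vu (Vu phi) s v) u (Vu (Vu (Vu phi)) u v) /\ D3 (fun s => Vu (Vu phi) u s) v (Vv (Vu (Vu phi)) u v)).
  { intros u v H. destruct (Puu0 u v H), (Puu1 u v H), (Puu2 u v H). split; [apply D3u|apply D3v]; assumption. }
  assert (Gvu : forall u v, D u v -> D3 (fun s => Vv (Vu phi) s v) u (Vu (Vv (Vu phi)) u v) /\ D3 (fun s => Vv (Vu phi) u s) v (Vv (Vv (Vu phi)) u v)).
  { intros u v H. destruct (Pvu0 u v H), (Pvu1 u v H), (Pvu2 u v H). split; [apply D3u|apply D3v]; assumption. }
  assert (Guv : forall u v, D u v -> D3 (fun s => Vu (Vv phi) s v) u (Vu (Vu (Vv phi)) u v) /\ D3 (fun s => Vu (Vv phi) u s) v (Vv (Vu (Vv phi)) u v)).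
  { intros u v H. destruct (Puv0 u v H), (Puv1 u v H), (Puv2 u v H). split; [apply D3u|apply D3v]; assumption. }
  assert (HE : forall u v, coefE f_xyz 4 phi u v = -/12 * hh (phi u v) (Vu phi u v) (Vu phi u v))
    by (intros; unfold coefE; rewrite hm_eq; reflexivity).
  assert (HF : forall u v, coefF f_xyz 4 phi u v = -/12 * hh (phi u v) (Vu phi u v) (Vv phi u v))
    by (intros; unfold coefF; rewrite hm_eq; reflexivity).
  assert (HG : forall u v, coefG f_xyz 4 phi u v = -/12 * hh (phi u v) (Vv phi u v) (Vv phi u v))
    by (intros; unfold coefG; rewrite hm_eq; reflexivity).
  assert (dEu : forall u v, D u v -> pdu (coefE f_xyz 4 phi) u v =
     -/12 * (TT (phi u v) (Vu phi u v) (Vu phi u v) (Vu phi u v) + hh (phi u v) (Vu (Vu phi) u v) (Vu phi u v)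
             + hh (phi u v) (Vu phi u v) (Vu (Vu phi) u v))).
  { intros u v H. unfold pdu. rewrite (Derive_ext _ (fun s => -/12 * hh (phi s v) (Vu phi s v) (Vu phi s v))) by (intros; apply HE).
    apply is_derive_unique, is_derive_c. destruct (Gp u v H) as [A1 _], (Gu u v H) as [A2 _]. apply (d_hh (fun s => phi s v) (fun s => Vu phi s v) (fun s => Vu phi s v)); assumption. }
  assert (dEv : forall u v, D u v -> pdv (coefE f_xyz 4 phi) u v =
     -/12 * (TT (phi u v) (Vv phi u v) (Vu phi u v) (Vu phi u v) + hh (phi u v) (Vv (Vu phi) u v) (Vu phi u v)
             + hh (phi u v) (Vu phi u v) (Vv (Vu phi) u v))).
  { intros u v H. unfold pdv. rewrite (Derive_ext _ (fun s => -/12 * hh (phi u s) (Vu phi u s) (Vu phi u s))) by (intros; apply HE).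
    apply is_derive_unique, is_derive_c. destruct (Gp u v H) as [_ A1], (Gu u v H) as [_ A2]. apply (d_hh (fun s => phi u s) (fun s => Vu phi u s) (fun s => Vu phi u s)); assumption. }
  assert (dFu : forall u v, D u v -> pdu (coefF f_xyz 4 phi) u v =
     -/12 * (TT (phi u v) (Vu phi u v) (Vu phi u v) (Vv phi u v) + hh (phi u v) (Vu (Vu phi) u v) (Vv phi u v)
             + hh (phi u v) (Vu phi u v) (Vu (Vv phi) u v))).
  { intros u v H. unfold pdu. rewrite (Derive_ext _ (fun s => -/12 * hh (phi s v) (Vu phi s v) (Vv phi s v))) by (intros; apply HF).
    apply is_derive_unique, is_derive_c. destruct (Gp u v H) as [A1 _], (Gu u v H) as [A2 _], (Gv u v H) as [A3 _].
    apply (d_hh (fun s => phi s v) (fun s => Vu phi s v) (fun s => Vv phi s v)); assumption. }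
  assert (dFv : forall u v, D u v -> pdv (coefF f_xyz 4 phi) u v =
     -/12 * (TT (phi u v) (Vv phi u v) (Vu phi u v) (Vv phi u v) + hh (phi u v) (Vv (Vu phi) u v) (Vv phi u v)
             + hh (phi u v) (Vu phi u v) (Vv (Vv phi) u v))).
  { intros u v H. unfold pdv. rewrite (Derive_ext _ (fun s => -/12 * hh (phi u s) (Vu phi u s) (Vv phi u s))) by (intros; apply HF).
    apply is_derive_unique, is_derive_c. destruct (Gp u v H) as [_ A1], (Gu u v H) as [_ A2], (Gv u v H) as [_ A3].
    apply (d_hh (fun s => phi u s) (fun s => Vu phi u s) (fun s => Vv phi u s)); assumption. }
  assert (dGu : forall u v, D u v -> pdu (coefG f_xyz 4 phi) u v =
     -/12 * (TT (phi u v) (Vu phi u v) (Vv phi u v) (Vv phi u v) + hh (phi u v) (Vu (Vv phi) u v) (Vv phi u v)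
             + hh (phi u v) (Vv phi u v) (Vu (Vv phi) u v))).
  { intros u v H. unfold pdu. rewrite (Derive_ext _ (fun s => -/12 * hh (phi s v) (Vv phi s v) (Vv phi s v))) by (intros; apply HG).
    apply is_derive_unique, is_derive_c. destruct (Gp u v H) as [A1 _], (Gv u v H) as [A3 _].
    apply (d_hh (fun s => phi s v) (fun s => Vv phi s v) (fun s => Vv phi s v)); assumption. }
  assert (dGv : forall u v, D u v -> pdv (coefG f_xyz 4 phi) u v =
     -/12 * (TT (phi u v) (Vv phi u v) (Vv phi u v) (Vv phi u v) + hh (phi u v) (Vv (Vv phi) u v) (Vv phi u v)
             + hh (phi u v) (Vv phi u v) (Vv (Vv phi) u v))).
  { intros u v H. unfold pdv. rewrite (Derive_ext _ (fun s => -/12 * hh (phi u s) (Vv phi u s) (Vv phi u s))) by (intros; apply HG).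
    apply is_derive_unique, is_derive_c. destruct (Gp u v H) as [_ A1], (Gv u v H) as [_ A3].
    apply (d_hh (fun s => phi u s) (fun s => Vv phi u s) (fun s => Vv phi u s)); assumption. }
  destruct (Gp u0 v0 HD0) as [Gpu Gpv], (Gu u0 v0 HD0) as [Guu' Guv'], (Gv u0 v0 HD0) as [Gvu' Gvv'],
    (Guu u0 v0 HD0) as [Guuu Guuv], (Gvu u0 v0 HD0) as [Gvuu Gvuv], (Guv u0 v0 HD0) as [Guvu Guvv].
  assert (dEvv : pdv (pdv (coefE f_xyz 4 phi)) u0 v0 =
    -/12*((QQ (Vv phi u0 v0) (Vv phi u0 v0) (Vu phi u0 v0) (Vu phi u0 v0)
           + TT (phi u0 v0) (Vv (Vv phi) u0 v0) (Vu phi u0 v0) (Vu phi u0 v0)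
           + TT (phi u0 v0) (Vv phi u0 v0) (Vv (Vu phi) u0 v0) (Vu phi u0 v0)
           + TT (phi u0 v0) (Vv phi u0 v0) (Vu phi u0 v0) (Vv (Vu phi) u0 v0))
        + (TT (phi u0 v0) (Vv phi u0 v0) (Vv (Vu phi) u0 v0) (Vu phi u0 v0)
           + hh (phi u0 v0) (Vv (Vv (Vu phi)) u0 v0) (Vu phi u0 v0)
           + hh (phi u0 v0) (Vv (Vu phi) u0 v0) (Vv (Vu phi) u0 v0))
        + (TT (phi u0 v0) (Vv phi u0 v0) (Vu phi u0 v0) (Vv (Vu phi) u0 v0)
           + hh (phi u0 v0) (Vv (Vu phi) u0 v0) (Vv (Vu phi) u0 v0)
           + hh (phi u0 v0) (Vu phi u0 v0) (Vv (Vv (Vu phi)) u0 v0)))).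
  { change (pdv (pdv (coefE f_xyz 4 phi)) u0 v0) with (Derive (fun t => pdv (coefE f_xyz 4 phi) u0 t) v0).
    rewrite (Derive_ext_loc _ (fun t => -/12 * (TT (phi u0 t) (Vv phi u0 t) (Vu phi u0 t) (Vu phi u0 t)
       + hh (phi u0 t) (Vv (Vu phi) u0 t) (Vu phi u0 t) + hh (phi u0 t) (Vu phi u0 t) (Vv (Vu phi) u0 t)))).
    2: { apply (near _ v0 (r/4)); [lra|]. intros t Ht. apply dEv. apply HN; auto. }
    apply is_derive_unique, is_derive_c.
    apply isd_plus; [apply isd_plus|].
    - apply (d_TT (fun t => phi u0 t) (fun t => Vv phi u0 t) (fun t => Vu phi u0 t) (fun t => Vu phi u0 t)); assumption.
    - apply (d_hh (fun t => phi u0 t) (fun t => Vv (Vu phi) u0 t) (fun t => Vu phi u0 t)); assumption.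
    - apply (d_hh (fun t => phi u0 t) (fun t => Vu phi u0 t) (fun t => Vv (Vu phi) u0 t)); assumption. }
  assert (dFuv : pdv (pdu (coefF f_xyz 4 phi)) u0 v0 =
    -/12*((QQ (Vv phi u0 v0) (Vu phi u0 v0) (Vu phi u0 v0) (Vv phi u0 v0)
           + TT (phi u0 v0) (Vv (Vu phi) u0 v0) (Vu phi u0 v0) (Vv phi u0 v0)
           + TT (phi u0 v0) (Vu phi u0 v0) (Vv (Vu phi) u0 v0) (Vv phi u0 v0)
           + TT (phi u0 v0) (Vu phi u0 v0) (Vu phi u0 v0) (Vv (Vv phi) u0 v0))
        + (TT (phi u0 v0) (Vv phi u0 v0) (Vu (Vu phi) u0 v0) (Vv phi u0 v0)
           + hh (phi u0 v0) (Vv (Vu (Vu phi)) u0 v0) (Vv phi u0 v0)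
           + hh (phi u0 v0) (Vu (Vu phi) u0 v0) (Vv (Vv phi) u0 v0))
        + (TT (phi u0 v0) (Vv phi u0 v0) (Vu phi u0 v0) (Vu (Vv phi) u0 v0)
           + hh (phi u0 v0) (Vv (Vu phi) u0 v0) (Vu (Vv phi) u0 v0)
           + hh (phi u0 v0) (Vu phi u0 v0) (Vv (Vu (Vv phi)) u0 v0)))).
  { change (pdv (pdu (coefF f_xyz 4 phi)) u0 v0) with (Derive (fun t => pdu (coefF f_xyz 4 phi) u0 t) v0).
    rewrite (Derive_ext_loc _ (fun t => -/12 * (TT (phi u0 t) (Vu phi u0 t) (Vu phi u0 t) (Vv phi u0 t)
       + hh (phi u0 t) (Vu (Vu phi) u0 t) (Vv phi u0 t) + hh (phi u0 t) (Vu phi u0 t) (Vu (Vv phi) u0 t)))).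
    2: { apply (near _ v0 (r/4)); [lra|]. intros t Ht. apply dFu. apply HN; auto. }
    apply is_derive_unique, is_derive_c.
    apply isd_plus; [apply isd_plus|].
    - apply (d_TT (fun t => phi u0 t) (fun t => Vu phi u0 t) (fun t => Vu phi u0 t) (fun t => Vv phi u0 t)); assumption.
    - apply (d_hh (fun t => phi u0 t) (fun t => Vu (Vu phi) u0 t) (fun t => Vv phi u0 t)); assumption.
    - apply (d_hh (fun t => phi u0 t) (fun t => Vu phi u0 t) (fun t => Vu (Vv phi) u0 t)); assumption. }
  assert (dGuu : pdu (pdu (coefG f_xyz 4 phi)) u0 v0 =
    -/12*((QQ (Vu phi u0 v0) (Vu phi u0 v0) (Vv phi u0 v0) (Vv phi u0 v0)
           + TT (phi u0 v0) (Vu (Vu phi) u0 v0) (Vv phi u0 v0) (Vv phi u0 v0)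
           + TT (phi u0 v0) (Vu phi u0 v0) (Vu (Vv phi) u0 v0) (Vv phi u0 v0)
           + TT (phi u0 v0) (Vu phi u0 v0) (Vv phi u0 v0) (Vu (Vv phi) u0 v0))
        + (TT (phi u0 v0) (Vu phi u0 v0) (Vu (Vv phi) u0 v0) (Vv phi u0 v0)
           + hh (phi u0 v0) (Vu (Vu (Vv phi)) u0 v0) (Vv phi u0 v0)
           + hh (phi u0 v0) (Vu (Vv phi) u0 v0) (Vu (Vv phi) u0 v0))
        + (TT (phi u0 v0) (Vu phi u0 v0) (Vv phi u0 v0) (Vu (Vv phi) u0 v0)
           + hh (phi u0 v0) (Vu (Vv phi) u0 v0) (Vu (Vv phi) u0 v0)
           + hh (phi u0 v0) (Vv phi u0 v0) (Vu (Vu (Vv phi)) u0 v0)))).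
  { change (pdu (pdu (coefG f_xyz 4 phi)) u0 v0) with (Derive (fun t => pdu (coefG f_xyz 4 phi) t v0) u0).
    rewrite (Derive_ext_loc _ (fun t => -/12 * (TT (phi t v0) (Vu phi t v0) (Vv phi t v0) (Vv phi t v0)
       + hh (phi t v0) (Vu (Vv phi) t v0) (Vv phi t v0) + hh (phi t v0) (Vv phi t v0) (Vu (Vv phi) t v0)))).
    2: { apply (near _ u0 (r/4)); [lra|]. intros t Ht. apply dGu. apply HN; auto. }
    apply is_derive_unique, is_derive_c.
    apply isd_plus; [apply isd_plus|].
    - apply (d_TT (fun t => phi t v0) (fun t => Vu phi t v0) (fun t => Vv phi t v0) (fun t => Vv phi t v0)); assumption.
    - apply (d_hh (fun t => phi t v0) (fun t => Vu (Vv phi) t v0) (fun t => Vv phi t v0)); assumption.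
    - apply (d_hh (fun t => phi t v0) (fun t => Vv phi t v0) (fun t => Vu (Vv phi) t v0)); assumption. }
  assert (Hfp : forall u v, D u v -> fp (phi u v) = 1).
  { intros u v H. destruct (HM u v H) as [Hf _]. rewrite <- f_xyz_fp. exact Hf. }
  assert (HC1 : forall u v, Rabs (u-u0) < r/4 -> Rabs (v-v0) < r/4 ->
            gg (phi u v) (Vu phi u v) = 0 /\ gg (phi u v) (Vv phi u v) = 0).
  { intros u v H1 H2. pose proof (HL u v H1 H2) as HLuv. pose proof (HN u v H1 H2) as HDuv.
    destruct (Gp u v HDuv) as [Au Av]. split.
    - rewrite <- (is_derive_unique _ _ _ (d_fp _ _ _ Au)).
      rewrite (Derive_ext_loc _ (fun _ => 1)). apply Derive_const.
      apply (filter_imp (fun s => D s v)); [intros s Hs; apply Hfp; exact Hs|].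
      exact (locally_2d_1d_const_y _ _ _ HLuv).
    - rewrite <- (is_derive_unique _ _ _ (d_fp _ _ _ Av)).
      rewrite (Derive_ext_loc _ (fun _ => 1)). apply Derive_const.
      apply (filter_imp (fun s => D u s)); [intros s Hs; apply Hfp; exact Hs|].
      exact (locally_2d_1d_const_x _ _ _ HLuv). }
  assert (HCA : hh (phi u0 v0) (Vu phi u0 v0) (Vu phi u0 v0) + gg (phi u0 v0) (Vu (Vu phi) u0 v0) = 0).
  { rewrite <- (is_derive_unique _ _ _ (d_gg (fun s => phi s v0) (fun s => Vu phi s v0) _ _ _ Gpu Guu')).
    rewrite (Derive_ext_loc _ (fun _ => 0)). apply Derive_const.
    apply (near _ u0 (r/4)); [lra|]. intros t Ht. apply (proj1 (HC1 t v0 Ht H0v)). }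
  assert (HCB : hh (phi u0 v0) (Vv phi u0 v0) (Vu phi u0 v0) + gg (phi u0 v0) (Vv (Vu phi) u0 v0) = 0).
  { rewrite <- (is_derive_unique _ _ _ (d_gg (fun s => phi u0 s) (fun s => Vu phi u0 s) _ _ _ Gpv Guv')).
    rewrite (Derive_ext_loc _ (fun _ => 0)). apply Derive_const.
    apply (near _ v0 (r/4)); [lra|]. intros t Ht. apply (proj1 (HC1 u0 t H0u Ht)). }
  assert (HCC : hh (phi u0 v0) (Vv phi u0 v0) (Vv phi u0 v0) + gg (phi u0 v0) (Vv (Vv phi) u0 v0) = 0).
  { rewrite <- (is_derive_unique _ _ _ (d_gg (fun s => phi u0 s) (fun s => Vv phi u0 s) _ _ _ Gpv Gvv')).
    rewrite (Derive_ext_loc _ (fun _ => 0)). apply Derive_const.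
    apply (near _ v0 (r/4)); [lra|]. intros t Ht. apply (proj2 (HC1 u0 t H0u Ht)). }
  assert (SB : forall u v, Rabs (u-u0) < r/4 -> Rabs (v-v0) < r/4 -> Vu (Vv phi) u v = Vv (Vu phi) u v).
  { intros u v H1 H2. unfold Vu, Vv. apply triple_eq.
    - exact (schwarz_D (fun a b => coord (phi a b) 0) D u v (HL u v H1 H2) Q0 Pu0 Pv0 Cuv0 Cvu0).
    - exact (schwarz_D (fun a b => coord (phi a b) 1) D u v (HL u v H1 H2) Q1 Pu1 Pv1 Cuv1 Cvu1).
    - exact (schwarz_D (fun a b => coord (phi a b) 2) D u v (HL u v H1 H2) Q2 Pu2 Pv2 Cuv2 Cvu2). }
  assert (SK : Vv (Vu (Vv phi)) u0 v0 = Vv (Vv (Vu phi)) u0 v0).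
  { apply Vv_ext_loc. apply (near _ v0 (r/4)); [lra|]. intros t Ht. apply SB; auto. }
  assert (SL : Vu (Vu (Vv phi)) u0 v0 = Vv (Vu (Vu phi)) u0 v0).
  { transitivity (Vu (Vv (Vu phi)) u0 v0).
    - apply Vu_ext_loc. apply (near _ u0 (r/4)); [lra|]. intros t Ht. apply SB; auto.
    - unfold Vu, Vv. apply triple_eq.
      + exact (schwarz_D (pdu (fun a b => coord (phi a b) 0)) D u0 v0 (HL u0 v0 H0u H0v) Pu0 Puu0 Pvu0 Cuvu0 Cvuu0).
      + exact (schwarz_D (pdu (fun a b => coord (phi a b) 1)) D u0 v0 (HL u0 v0 H0u H0v) Pu1 Puu1 Pvu1 Cuvu1 Cvuu1).
      + exact (schwarz_D (pdu (fun a b => coord (phi a b) 2)) D u0 v0 (HL u0 v0 H0u H0v) Pu2 Puu2 Pvu2 Cuvu2 Cvuu2). }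
  change (brio (coefE f_xyz 4 phi u0 v0) (coefF f_xyz 4 phi u0 v0) (coefG f_xyz 4 phi u0 v0)
    (pdu (coefE f_xyz 4 phi) u0 v0) (pdv (coefE f_xyz 4 phi) u0 v0)
    (pdu (coefF f_xyz 4 phi) u0 v0) (pdv (coefF f_xyz 4 phi) u0 v0)
    (pdu (coefG f_xyz 4 phi) u0 v0) (pdv (coefG f_xyz 4 phi) u0 v0)
    (pdv (pdv (coefE f_xyz 4 phi)) u0 v0) (pdv (pdu (coefF f_xyz 4 phi)) u0 v0)
    (pdu (pdu (coefG f_xyz 4 phi)) u0 v0) > 0).
  rewrite dEvv, dFuv, dGuu, (dEu u0 v0 HD0), (dEv u0 v0 HD0), (dFu u0 v0 HD0), (dFv u0 v0 HD0),
    (dGu u0 v0 HD0), (dGv u0 v0 HD0), HE, HF, HG.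
  rewrite SK, SL, (SB u0 v0 H0u H0v).
  destruct (HC1 u0 v0 H0u H0v) as [Ha Hb].
  apply core; auto.
  apply cross_det; auto.
Qed.


Lemma part1 : exists p : R3, index_cone f_xyz p.
Proof.
  exists (1,1,1). split.
  - simpl. lra.
  - exists (1,1,1), (1,-1,0), (1,1,-2).
    unfold qform3, det3. cbn [sum_f_R0].
    repeat rewrite hessian3_f by lia. unfold Hp. cbn [coord fst snd].
    repeat split; lra.
Qed.

Theorem lemma4p1 :
  (exists p : R3, index_cone f_xyz p) /\
  (forall (phi : R -> R -> R3) (u0 v0 r : R),
     0 < r ->
     (forall i : nat, Ck 3 (fun u v => coord (phi u v) i) (open_disc u0 v0 r)) ->
     (forall u v, open_disc u0 v0 r u v -> on_M f_xyz (phi u v)) ->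
     cross (phi_u phi u0 v0) (phi_v phi u0 v0) <> (0, 0, 0) ->
     gauss_curvature f_xyz 4 phi u0 v0 > 0).
Proof.
  split.
  - exact part1.
  - intros phi u0 v0 r Hr HCk HM Hcr. exact (part2 phi u0 v0 r Hr HCk HM Hcr).
Qed.
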